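(* Let $\boldsymbol{\Sigma}$ be a given $n\times n$ positive definite covariance matrix, and consider its multi-resolution decomposition (defined in the context) with $M$ resolutions and the same number $r_m=r$ of knots per region at every resolution $m=0,\dots,M$, so that $N=(M+1)r$. Then $\mathbf{B}=\mathrm{mrd}(\boldsymbol{\Sigma})$ can be computed in $\mathcal{O}(nN^2)$ time using the recursion defining the MRD.
   Context: Setting for the MRD. Grid indices $\mathcal{I}=\{1,\dots,n\}$ are recursively partitioned: for $m=0,\dots,M-1$ and $(j_1,\dots,j_m)\in\{1,\dots,J\}^m$, $\mathcal{I}_{j_1,\dots,j_m}$ (with $\mathcal{I}_{\emptyset}=\mathcal{I}$) is the disjoint union of $\mathcal{I}_{j_1,\dots,j_m,j_{m+1}}$, $j_{m+1}=1,\dots,J$; indices are ordered so finest sets $\mathcal{I}_{j_1,\dots,j_M}$ are contiguous in lexicographic order. Knot sets $\mathcal{K}_{j_1,\dots,j_m}\subset\mathcal{I}_{j_1,\dots,j_m}\setminus\mathcal{K}^{0:m-1}$, $|\mathcal{K}_{j_1,\dots,j_m}|=r_m$, chosen sequentially for $m=0,\dots,M$ (with $\mathcal{K}^m=\bigcup\mathcal{K}_{j_1,\dots,j_m}$, $\mathcal{K}^{0:m}=\bigcup_{l\le m}\mathcal{K}^l$) so that all knot sets partition $\mathcal{I}$. The MRD algorithm: for $m=0,\dots,M$, each $(j_1,\dots,j_m)$ and $\ell=0,\dots,m$, compute $\mathbf{W}^\ell_{j_1,\dots,j_m}=\boldsymbol{\Sigma}[\mathcal{I}_{j_1,\dots,j_m},\mathcal{K}_{j_1,\dots,j_\ell}]-\sum_{k=0}^{\ell-1}\mathbf{W}^k_{j_1,\dots,j_m}(\mathbf{V}^k_{j_1,\dots,j_k})^{-1}(\mathbf{V}^k_{j_1,\dots,j_\ell})'$,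 $\mathbf{V}^\ell_{j_1,\dots,j_m}=\boldsymbol{\Sigma}[\mathcal{K}_{j_1,\dots,j_m},\mathcal{K}_{j_1,\dots,j_\ell}]-\sum_{k=0}^{\ell-1}\mathbf{V}^k_{j_1,\dots,j_m}(\mathbf{V}^k_{j_1,\dots,j_k})^{-1}(\mathbf{V}^k_{j_1,\dots,j_\ell})'$, then set $\mathbf{B}_{j_1,\dots,j_m}=\mathbf{W}^m_{j_1,\dots,j_m}(\mathbf{V}^m_{j_1,\dots,j_m})^{-1/2}$; output $\mathbf{B}=(\mathbf{B}^M,\dots,\mathbf{B}^0)$ with $\mathbf{B}^m=\mathrm{blockdiag}(\{\mathbf{B}_{j_1,\dots,j_m}\})$ in lexicographic order. *)

(* Defs.v *)
From HB Require Import structures.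
From mathcomp Require Import all_boot all_order all_algebra.
Set Implicit Arguments. Unset Strict Implicit. Unset Printing Implicit Defensive.
Import Order.TTheory GRing.Theory Num.Theory.
Local Open Scope ring_scope.

Definition posdef (R : realFieldType) (n : nat) (S : 'M[R]_n) : Prop :=
  S^T = S /\ forall x : 'cV[R]_n, x != 0 -> 0 < (x^T *m S *m x) ord0 ord0.

(* A region I_{j1..jm} is represented by its path p = [:: j1; ...; jm]       *)
(* (a seq 'I_J of size m <= M).  The nested partition is encoded by          *)
(* reg : 'I_n -> M.-tuple 'I_J giving the finest region of each index, so    *)
(*   i \in I_p  <->  take (size p) (reg i) = p.                              *)
(* Knot sets: kn p : 'I_r -> 'I_n enumerates K_p (|K_p| = r).                *)
Definition in_region (n M J : nat) (reg : 'I_n -> M.-tuple 'I_J)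
  (p : seq 'I_J) (i : 'I_n) : bool := take (size p) (reg i) == p.

Definition mrd_structure (n M J r : nat) (reg : 'I_n -> M.-tuple 'I_J)
  (kn : seq 'I_J -> 'I_r -> 'I_n) : Prop :=
  [/\ (* |K_p| = r *)
      forall p, (size p <= M)%N -> injective (kn p),
      forall p a, (size p <= M)%N -> in_region reg p (kn p a),
      forall p q a b, (size p <= M)%N -> (size q <= M)%N ->
        kn p a = kn q b -> p = q &
      forall i, exists p a, (size p <= M)%N /\ kn p a = i].

(* The MRD recursion.  mrdWV f l p = (W^l_p, V^l_p) where f is fuel (any     *)
(* f > l suffices; we use f = l.+1).  W^l_p is stored as an n x r matrix     *)
(* whose row i is given by the defining formula; only rows i \in I_p are    *)
(* part of W^l_p and only those are used below.                              *)
Section MRD.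
Variables (R : realFieldType) (n J r : nat).
Variable (kn : seq 'I_J -> 'I_r -> 'I_n).
Variable (S : 'M[R]_n).

Fixpoint mrdWV (f l : nat) (p : seq 'I_J) : 'M[R]_(n, r) * 'M[R]_r :=
  match f with
  | 0 => (0, 0)
  | f'.+1 =>
    ( \matrix_(i, b) S i (kn (take l p) b)
        - \sum_(k < l) ((mrdWV f' k p).1
                        *m invmx (mrdWV f' k (take k p)).2
                        *m ((mrdWV f' k (take l p)).2)^T),
      \matrix_(a, b) S (kn p a) (kn (take l p) b)
        - \sum_(k < l) ((mrdWV f' k p).2
                        *m invmx (mrdWV f' k (take k p)).2
                        *m ((mrdWV f' k (take l p)).2)^T) )
  end.

Definition mrdW (l : nat) (p : seq 'I_J) : 'M[R]_(n, r) := (mrdWV l.+1 l p).1.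
Definition mrdV (l : nat) (p : seq 'I_J) : 'M[R]_r := (mrdWV l.+1 l p).2.
End MRD.

(* B_p = W^m_p (V^m_p)^{-1/2} with m = size p; the inverse square root is   *)
(* an arbitrary given operation isq on r x r matrices.                       *)
Definition mrdBlock (R : realFieldType) (n J r : nat)
  (isq : 'M[R]_r -> 'M[R]_r) (kn : seq 'I_J -> 'I_r -> 'I_n) (S : 'M[R]_n)
  (p : seq 'I_J) : 'M[R]_(n, r) :=
  mrdW kn S (size p) p *m isq (mrdV kn S (size p) p).

(* The full matrix B = (B^M, ..., B^0): its column indexed by (p, a), with   *)
(* size p <= M, is the a-th column of the block B_p on rows I_p and 0 on     *)
(* the other rows (block-diagonal structure of B^m).                         *)
Definition mrd (R : realFieldType) (n M J r : nat)
  (isq : 'M[R]_r -> 'M[R]_r) (reg : 'I_n -> M.-tuple 'I_J)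
  (kn : seq 'I_J -> 'I_r -> 'I_n) (S : 'M[R]_n)
  (i : 'I_n) (p : seq 'I_J) (a : 'I_r) : R :=
  if in_region reg p i then mrdBlock isq kn S p i a else 0.

(* Cost model: straight-line programs (algebraic complexity).                *)
Inductive opnd (n : nat) : Type :=
| OInp of 'I_n & 'I_n
| OReg of nat
| OZero.

(* Instructions: scalar +, -, * (cost 1 each) and, on r x r blocks,          *)
(* matrix inversion and the inverse square root (cost r^3 each).  Each      *)
(* instruction appends its result(s) to the register file (blocks in        *)
(* row-major order).                                                         *)
Inductive instr (n r : nat) : Type :=
| IAdd of opnd n & opnd n
| ISub of opnd n & opnd n
| IMul of opnd n & opnd n
| IInv of ('I_r -> 'I_r -> opnd n)
| IIsq of ('I_r -> 'I_r -> opnd n).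

Definition instr_cost (n r : nat) (c : instr n r) : nat :=
  match c with
  | IAdd _ _ | ISub _ _ | IMul _ _ => 1
  | IInv _ | IIsq _ => r ^ 3
  end%N.

Definition prog_cost (n r : nat) (P : seq (instr n r)) : nat :=
  (\sum_(c <- P) instr_cost c)%N.

Section Eval.
Variables (R : realFieldType) (n r : nat).
Variable (isq : 'M[R]_r -> 'M[R]_r).
Variable (S : 'M[R]_n).

Definition eval_opnd (regs : seq R) (x : opnd n) : R :=
  match x with
  | OInp i j => S i j
  | OReg k => nth 0 regs k
  | OZero => 0
  end.

Definition flat_mx (A : 'M[R]_r) : seq R :=
  flatten [seq [seq A a b | b <- enum 'I_r] | a <- enum 'I_r].

Definition exec_instr (regs : seq R) (c : instr n r) : seq R :=
  match c with
  | IAdd x y => rcons regs (eval_opnd regs x + eval_opnd regs y)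
  | ISub x y => rcons regs (eval_opnd regs x - eval_opnd regs y)
  | IMul x y => rcons regs (eval_opnd regs x * eval_opnd regs y)
  | IInv f => regs ++ flat_mx (invmx (\matrix_(a, b) eval_opnd regs (f a b)))
  | IIsq f => regs ++ flat_mx (isq (\matrix_(a, b) eval_opnd regs (f a b)))
  end.

Definition run_prog (P : seq (instr n r)) : seq R := foldl exec_instr [::] P.
End Eval.

(* Main.v *)
Require Import Defs.
From HB Require Import structures.
From mathcomp Require Import all_boot all_order all_algebra zify.
Set Implicit Arguments. Unset Strict Implicit. Unset Printing Implicit Defensive.
Import Order.TTheory GRing.Theory Num.Theory.
Local Open Scope ring_scope.


Section Math.
Variables (R : realFieldType) (n J r : nat).
Variable (kn : seq 'I_J -> 'I_r -> 'I_n).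
Variable (S : 'M[R]_n).

Local Notation WV := (mrdWV kn S).

Lemma WV_fuel f g l p : (l < f)%N -> (l < g)%N -> WV f l p = WV g l p.
Proof.
elim: f g l p => [|f IH] [|g] l p //= lf lg.
have h1 : forall k, (k < l)%N -> (k < f)%N by move=> k kl; apply: leq_trans kl _.
have h2 : forall k, (k < l)%N -> (k < g)%N by move=> k kl; apply: leq_trans kl _.
congr (_, _); congr (_ - _); apply: eq_bigr => k _;
  by rewrite !(IH g k) // ?h1 ?h2.
Qed.

Lemma WV_VW f l p a b : (WV f l p).2 a b = (WV f l p).1 (kn p a) b.
Proof.
elim: f l p a b => [|f IH] l p a b /=; first by rewrite !mxE.
rewrite !mxE !summxE; congr (_ - _); apply: eq_bigr => k _.
rewrite !mxE; apply: eq_bigr => j _; rewrite !mxE; congr (_ * _).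
by apply: eq_bigr => i _; rewrite IH.
Qed.

Lemma WV_take f l p : (WV f l p).1 = (WV f l (take l p)).1.
Proof.
elim: f l p => [|f IH] l p //=.
rewrite take_takel //; congr (_ - _); apply: eq_bigr => k _.
rewrite (IH k p) (IH k (take l p)) !take_takel //; exact: ltnW.
Qed.

Lemma mrdW_take l p : mrdW kn S l p = mrdW kn S l (take l p).
Proof. exact: WV_take. Qed.

Lemma mrdV_W l p a b : mrdV kn S l p a b = mrdW kn S l p (kn p a) b.
Proof. exact: WV_VW. Qed.

Lemma mrdW_rec l p : mrdW kn S l p =
  \matrix_(i, b) S i (kn (take l p) b)
  - \sum_(k < l) (mrdW kn S k p *m invmx (mrdV kn S k (take k p))
                  *m (mrdV kn S k (take l p))^T).
Proof.
rewrite /mrdW /=; congr (_ - _); apply: eq_bigr => k _.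
rewrite /mrdV !(@WV_fuel l k.+1) //.
Qed.
End Math.


Section Comp.
Variables (n J r : nat).

Inductive key : Type :=
| KW of nat & 'I_n & 'I_r
| KU of nat & 'I_n & 'I_r
| KBl of bool & seq 'I_J & 'I_r & 'I_r
| KB of nat & 'I_n & 'I_r.

Definition key_eqb (k1 k2 : key) : bool :=
  match k1, k2 with
  | KW l i b, KW l' i' b' => [&& l == l', i == i' & b == b']
  | KU l i b, KU l' i' b' => [&& l == l', i == i' & b == b']
  | KB l i b, KB l' i' b' => [&& l == l', i == i' & b == b']
  | KBl x q a b, KBl x' q' a' b' => [&& x == x', q == q', a == a' & b == b']
  | _, _ => false
  end.

Lemma key_eqbP k1 k2 : reflect (k1 = k2) (key_eqb k1 k2).
Proof.
case: k1 => [l i b|l i b|x q a b|l i b]; case: k2 => [l' i' b'|l' i' b'|x' q' a' b'|l' i' b'] /=;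
  try by constructor.
all: try by apply: (iffP idP) => [/and3P[/eqP-> /eqP-> /eqP->]|[-> -> ->]] //; rewrite !eqxx.
by apply: (iffP idP) => [/and4P[/eqP-> /eqP-> /eqP-> /eqP->]|[-> -> -> ->]] //; rewrite !eqxx.
Qed.

Inductive src : Type := SInp of 'I_n & 'I_n | SKey of key | SZero.

Inductive def : Type :=
| DLin of key & bool & src & seq (src * src)
| DBlk of bool & seq 'I_J & ('I_r -> 'I_r -> src).

Definition top (env : key -> opnd n) (s : src) : opnd n :=
  match s with SInp i j => OInp i j | SKey k => env k | SZero => OZero n end.

Fixpoint lin_code (add : bool) (cnt : nat) (acc : opnd n)
  (ts : seq (opnd n * opnd n)) : seq (instr n r) * opnd n :=
  if ts is (x, y) :: ts' then
    let res := lin_code add cnt.+2 (OReg n cnt.+1) ts' in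
    (@IMul n r x y :: (if add then @IAdd n r acc (OReg n cnt) else @ISub n r acc (OReg n cnt))
       :: res.1, res.2)
  else ([::], acc).

Record st := St { sP : seq (instr n r); sc : nat; se : key -> opnd n }.

Definition step (s : st) (d : def) : st :=
  match d with
  | DLin k add base ts =>
    let res := lin_code add (sc s) (top (se s) base)
                 [seq (top (se s) t.1, top (se s) t.2) | t <- ts] in
    St (sP s ++ res.1) (sc s + 2 * size ts)
       (fun k' => if key_eqb k' k then res.2 else se s k')
  | DBlk bq q f =>
    let g := fun a b => top (se s) (f a b) in
    St (sP s ++ [:: if bq then IIsq g else IInv g]) (sc s + r * r)
       (fun k' => match k' with
                  | KBl bq' q' a b =>
                    if (bq' == bq) && (q' == q) then OReg n (sc s + (a * r + b))
                    else se s k'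
                  | _ => se s k' end)
  end.

Definition cost_def (d : def) : nat :=
  match d with DLin _ _ _ ts => (2 * size ts)%N | DBlk _ _ _ => (r ^ 3)%N end.

Definition s0 : st := St [::] 0 (fun _ => OZero n).

Definition run_phases (ph : nat -> seq def) (T : nat) : st :=
  foldl (fun s t => foldl step s (ph t)) s0 (iota 0 T).

Lemma prog_cost_cat (P1 P2 : seq (instr n r)) :
  prog_cost (P1 ++ P2) = (prog_cost P1 + prog_cost P2)%N.
Proof. by rewrite /prog_cost big_cat. Qed.

Lemma lin_code_cost add cnt acc ts :
  prog_cost (lin_code add cnt acc ts).1 = (2 * size ts)%N.
Proof.
elim: ts cnt acc => [|[x y] ts IH] cnt acc /=; first by rewrite /prog_cost big_nil.
rewrite /prog_cost !big_cons -/(prog_cost _) IH; case: (add) => /=; lia.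
Qed.

Lemma step_cost s d : prog_cost (sP (step s d)) = (prog_cost (sP s) + cost_def d)%N.
Proof.
case: d => [k add base ts|bq q f] /=; rewrite prog_cost_cat.
  by rewrite lin_code_cost size_map.
by case: bq; rewrite /prog_cost big_cons big_nil /= addn0.
Qed.

Lemma steps_cost s ds : prog_cost (sP (foldl step s ds)) =
  (prog_cost (sP s) + \sum_(d <- ds) cost_def d)%N.
Proof.
elim: ds s => [|d ds IH] s /=; first by rewrite big_nil addn0.
by rewrite IH step_cost big_cons addnA.
Qed.

Lemma run_phases_cost ph T : prog_cost (sP (run_phases ph T)) =
  (\sum_(t <- iota 0 T) \sum_(d <- ph t) cost_def d)%N.
Proof.
rewrite /run_phases; elim/last_ind: (iota 0 T) => [|s t IH].
  by rewrite big_nil /= /prog_cost big_nil.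
by rewrite foldl_rcons steps_cost IH -cats1 big_cat big_seq1.
Qed.
End Comp.

Section Sem.
Variables (R : realFieldType) (n J r : nat).
Variable (isq : 'M[R]_r -> 'M[R]_r).
Variable (S : 'M[R]_n).
Variable (val : key n J r -> R).

Local Notation key := (key n J r).
Local Notation src := (src n J r).
Local Notation def := (def n J r).

Definition ok (regs : seq R) (o : opnd n) : bool :=
  match o with OReg k => (k < size regs)%N | _ => true end.

Local Notation ev := (eval_opnd S).

Definition correct regs (env : key -> opnd n) (D : key -> Prop) :=
  forall k, D k -> ok regs (env k) /\ ev regs (env k) = val k.

Definition sv (s : src) : R :=
  match s with SInp i j => S i j | SKey k => val k | SZero => 0 end.

Definition srcD (D : key -> Prop) (s : src) : Prop :=
  match s with SKey k => D k | _ => True end.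

Definition def_ok (D : key -> Prop) (d : def) : Prop :=
  match d with
  | DLin k add base ts =>
    [/\ srcD D base, (forall t, List.In t ts -> srcD D t.1 /\ srcD D t.2) &
      val k = (if add then sv base + \sum_(t <- ts) sv t.1 * sv t.2
               else sv base - \sum_(t <- ts) sv t.1 * sv t.2)]
  | DBlk bq q f =>
    (forall a b, srcD D (f a b)) /\
    forall a b, val (@KBl n J r bq q a b) =
      (if bq then isq else invmx) (\matrix_(a, b) sv (f a b)) a b
  end.

Definition defines (d : def) (k : key) : Prop :=
  match d with
  | DLin k' _ _ _ => k = k'
  | DBlk bq q _ => exists a b, k = @KBl n J r bq q a b
  end.

Local Notation run := (foldl (exec_instr isq S)).

Definition inv (s : st n J r) (D : key -> Prop) :=
  size (run [::] (sP s)) = sc s /\ correct (run [::] (sP s)) (se s) D.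

Lemma ev_ext regs t o : ok regs o -> ok (regs ++ t) o /\ ev (regs ++ t) o = ev regs o.
Proof.
case: o => //= k kl; split; first by rewrite size_cat ltn_addr.
by rewrite nth_cat kl.
Qed.

Lemma exec_ext regs c : exists t, exec_instr isq S regs c = regs ++ t.
Proof.
case: c => [x y|x y|x y|f|f] /=; try by rewrite -cats1; eexists.
all: by eexists.
Qed.

Lemma run_ext regs P : exists t, run regs P = regs ++ t.
Proof.
elim: P regs => [|c P IH] regs /=; first by exists [::]; rewrite cats0.
have [t1 ->] := exec_ext regs c; have [t2 ->] := IH (regs ++ t1).
by exists (t1 ++ t2); rewrite catA.
Qed.

Lemma correct_ext regs t env D : correct regs env D -> correct (regs ++ t) env D.
Proof. by move=> C k /C [o e]; have [-> ->] := ev_ext t o. Qed.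

Lemma correct_anti regs env D D' : correct regs env D' -> (forall k, D k -> D' k) ->
  correct regs env D.
Proof. by move=> C sub k /sub /C. Qed.

Lemma srcOK regs env D s : correct regs env D -> srcD D s ->
  ok regs (top env s) /\ ev regs (top env s) = sv s.
Proof. by case: s => [i j|k|] //= C /C. Qed.

Lemma lin_ok add cnt acc ts regs :
  size regs = cnt -> ok regs acc ->
  (forall t, List.In t ts -> ok regs t.1 /\ ok regs t.2) ->
  let res := lin_code r add cnt acc ts in
  let regs' := run regs res.1 in
  [/\ size regs' = (cnt + 2 * size ts)%N, (exists e, regs' = regs ++ e),
      ok regs' res.2 &
      ev regs' res.2 = (if add then ev regs acc + \sum_(t <- ts) ev regs t.1 * ev regs t.2
                        else ev regs acc - \sum_(t <- ts) ev regs t.1 * ev regs t.2)].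
Proof.
elim: ts cnt acc regs => [|[x y] ts IH] cnt acc regs /= sz oka okt.
  split=> //; first by rewrite sz addn0.
    by exists [::]; rewrite cats0.
  by rewrite big_nil addr0 subr0; case: (add).
have [okx oky] := okt _ (or_introl erefl).
set v := ev regs x * ev regs y.
set regs1 := rcons regs v.
set w := if add then ev regs acc + v else ev regs acc - v.
set regs2 := rcons regs1 w.
have e2 : exec_instr isq S regs1 (if add then @IAdd n r acc (OReg n cnt) else @ISub n r acc (OReg n cnt)) = regs2.
  have [ka kv] := ev_ext [:: v] oka.
  rewrite /regs2 /w /regs1; case: (add) => /=; congr rcons;
  by rewrite -cats1 kv nth_cat sz ltnn subnn.
rewrite e2.
have s2 : size regs2 = cnt.+2 by rewrite /regs2 /regs1 !size_rcons sz.
have r2 : regs2 = regs ++ [:: v; w] by rewrite /regs2 /regs1 -!cats1 -catA.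
have okacc : ok regs2 (OReg n cnt.+1) by rewrite /= s2.
have okt' : forall t, List.In t ts -> ok regs2 t.1 /\ ok regs2 t.2.
  move=> t tin; have [o1 o2] := okt t (or_intror tin).
  by rewrite r2; have [-> _] := ev_ext [:: v; w] o1; have [-> _] := ev_ext [:: v; w] o2.
have [IH1 [e IH2] IH3 IH4] := IH cnt.+2 (OReg n cnt.+1) regs2 s2 okacc okt'.
split=> //.
- by rewrite IH1; lia.
- by exists ([:: v; w] ++ e); rewrite IH2 r2 catA.
rewrite IH4 big_cons.
have -> : ev regs2 (OReg n cnt.+1) = w by rewrite /= r2 nth_cat sz ltnNge leqnSn /= subSnn.
have -> : \sum_(t <- ts) ev regs2 t.1 * ev regs2 t.2 = \sum_(t <- ts) ev regs t.1 * ev regs t.2.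
  elim: ts okt' okt {IH IH1 IH2 IH3 IH4} => [|t ts IHt] okt' okt; first by rewrite !big_nil.
  rewrite !big_cons IHt; last 2 first.
  - by move=> t' ti; apply: okt'; right.
  - by move=> t' ti; apply: okt; case: ti => [->|ti]; [left|right; right].
  have [o1 o2] := okt t (or_intror (or_introl erefl)).
  rewrite r2; have [_ ->] := ev_ext [:: v; w] o1; have [_ ->] := ev_ext [:: v; w] o2.
  done.
rewrite /w; case: (add); rewrite /v; [by rewrite addrA|by rewrite opprD addrA].
Qed.

Lemma In_map (A B : Type) (f : A -> B) (s : seq A) y :
  List.In y (map f s) -> exists x, List.In x s /\ y = f x.
Proof.
elim: s => [|x s IH] //= [<-|/IH [x' [xi ->]]]; first by exists x; split=> //; left.
by exists x'; split=> //; right.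
Qed.

Lemma big_In (T : Type) (s : seq T) (F G : T -> R) :
  (forall t, List.In t s -> F t = G t) -> \sum_(t <- s) F t = \sum_(t <- s) G t.
Proof.
elim: s => [|x s IH] H; first by rewrite !big_nil.
by rewrite !big_cons H ?IH //; [move=> t ti; apply: H; right|left].
Qed.

Lemma flatten_nth (T : Type) (x0 : T) (ss : seq (seq T)) a b :
  (forall s, List.In s ss -> size s = r) -> (b < r)%N ->
  nth x0 (flatten ss) (a * r + b) = nth x0 (nth [::] ss a) b.
Proof.
elim: ss a => [|s ss IH] a H br /=; first by rewrite !nth_nil.
have sz : size s = r by apply: H; left.
rewrite nth_cat sz; case: a => [|a] /=; first by rewrite mul0n add0n br.
rewrite mulSn -addnA ltnNge leq_addr /= addKn IH //.
by move=> s' si; apply: H; right.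
Qed.

Lemma flatten_size (T : Type) (ss : seq (seq T)) :
  (forall s, List.In s ss -> size s = r) -> size (flatten ss) = (size ss * r)%N.
Proof.
elim: ss => [|s ss IH] H //=.
by rewrite size_cat IH ?H ?mulSn //; [left|move=> s' si; apply: H; right].
Qed.

Lemma flat_rows (A : 'M[R]_r) s : List.In s [seq [seq A a b | b <- enum 'I_r] | a <- enum 'I_r] ->
  size s = r.
Proof. by move=> H; have [a [_ ->]] := In_map H; rewrite size_map size_enum_ord. Qed.

Lemma flat_size (A : 'M[R]_r) : size (flat_mx A) = (r * r)%N.
Proof.
rewrite /flat_mx flatten_size; first by rewrite size_map size_enum_ord.
by move=> s; apply: flat_rows.
Qed.

Lemma flat_nth (A : 'M[R]_r) (a b : 'I_r) : nth 0 (flat_mx A) (a * r + b) = A a b.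
Proof.
rewrite /flat_mx flatten_nth //; last exact: flat_rows.
rewrite (nth_map a) ?size_enum_ord // nth_ord_enum.
by rewrite (nth_map a) ?size_enum_ord // nth_ord_enum.
Qed.

Lemma idx_lt (a b : 'I_r) : (a * r + b < r * r)%N.
Proof.
have := ltn_ord a; have := ltn_ord b; move: (nat_of_ord a) (nat_of_ord b) => x y hy hx.
apply: (@leq_trans (x * r + r)); first by rewrite ltn_add2l.
have -> : (x * r + r = x.+1 * r)%N by rewrite mulSn addnC.
by rewrite leq_mul2r hx orbT.
Qed.

Lemma step_ok s D d : inv s D -> def_ok D d -> inv (step s d) (fun k => D k \/ defines d k).
Proof.
case: s => P cnt env [/= sz C].
case: d => [k add base ts|bq q f] /=.
- case=> sb st ev_k.
  set regs := run [::] P.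
  have okt : forall t, List.In t [seq (top env t.1, top env t.2) | t <- ts] ->
      ok regs t.1 /\ ok regs t.2.
    move=> t tH; have [t0 [ti ->]] := In_map tH => /=; have [h1 h2] := st t0 ti.
    by have [? _] := srcOK C h1; have [? _] := srcOK C h2.
  have [ob eb] := srcOK C sb.
  have := @lin_ok add cnt (top env base) _ regs sz ob okt; move=> [L1 [e L2] L3 L4].
  rewrite /inv /= foldl_cat -/regs L1 size_map; split=> // k' Dk'.
  case: key_eqbP => [->|nk].
    split=> //; rewrite L4 ev_k eb big_map.
    by rewrite (@big_In _ _ _ (fun t => sv t.1 * sv t.2)) //;
      move=> t ti /=; have [h1 h2] := st t ti; have [_ ->] := srcOK C h1; have [_ ->] := srcOK C h2.
  have Dk : D k' by case: Dk'.
  by rewrite L2; apply: (correct_ext _ C).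
- case=> sf ef.
  set regs := run [::] P.
  set g := fun a b => top env (f a b).
  have Mg : \matrix_(a, b) ev regs (g a b) = \matrix_(a, b) sv (f a b).
    by apply/matrixP => a b; rewrite !mxE; have [_ ->] := srcOK C (sf a b).
  set Mv := (if bq then isq else invmx) (\matrix_(a, b) sv (f a b)).
  have ex : run regs [:: if bq then IIsq g else IInv g] = regs ++ flat_mx Mv.
    by rewrite /Mv -Mg; case: (bq).
  rewrite /inv /= foldl_cat -/regs ex size_cat flat_size sz; split=> // k' Dk'.
  case: k' Dk' => [l i b|l i b|bq' q' a b|l i b] Dk'.
  + by case: Dk' => [Dk|[a [b' //]]]; apply: (correct_ext _ C).
  + by case: Dk' => [Dk|[a [b' //]]]; apply: (correct_ext _ C).
  + case: andP => [[/eqP e1 /eqP e2]|ne].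
      rewrite /= size_cat flat_size sz ltn_add2l idx_lt; split=> //.
      by rewrite nth_cat sz ltnNge leq_addr /= addKn flat_nth e1 e2 ef.
    case: Dk' => [Dk|[a' [b' [e1 e2 _ _]]]]; first by apply: (correct_ext _ C).
    by case: ne; rewrite e1 e2 !eqxx.
  + by case: Dk' => [Dk|[a [b' //]]]; apply: (correct_ext _ C).
Qed.

Lemma srcD_mono D D' x : (forall k, D k -> D' k) -> srcD D x -> srcD D' x.
Proof. by case: x => //= k H /H. Qed.

Lemma def_ok_mono D D' d : (forall k, D k -> D' k) -> def_ok D d -> def_ok D' d.
Proof.
move=> H; case: d => [k add base ts|bq q f] /=.
  case=> h1 h2 h3; split=> //; first exact: srcD_mono h1.
  by move=> t ti; have [a b] := h2 t ti; split; apply: srcD_mono H _.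
by case=> h1 h2; split=> // a b; apply: srcD_mono (h1 a b).
Qed.

Lemma steps_ok ds s D : inv s D -> (forall d, List.In d ds -> def_ok D d) ->
  inv (foldl (@step n J r) s ds) (fun k => D k \/ exists d, List.In d ds /\ defines d k).
Proof.
elim: ds s D => [|d ds IH] s D I H /=.
  by case: I => sz C; split=> // k [Dk|[d []]] //; apply: C.
have I1 := step_ok I (H d (or_introl erefl)).
have H' : forall d', List.In d' ds -> def_ok (fun k => D k \/ defines d k) d'.
  by move=> d' di; apply: def_ok_mono (H d' (or_intror di)) => k Dk; left.
have [sz C] := IH _ _ I1 H'.
split=> // k Dk; apply: C.
case: Dk => [Dk|[d' [[<-|di] dk]]]; [by left; left|by left; right|by right; exists d'].
Qed.

Lemma phases_ok (ph : nat -> seq def) (valid : key -> Prop) (kph : key -> nat) T :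
  (forall t d, (t < T)%N -> List.In d (ph t) ->
     def_ok (fun k => valid k /\ (kph k < t)%N) d) ->
  (forall t k, (t < T)%N -> valid k -> kph k = t ->
     exists d, List.In d (ph t) /\ defines d k) ->
  inv (run_phases ph T) (fun k => valid k /\ (kph k < T)%N).
Proof.
move=> Hd Hc; elim: T Hd Hc => [|T IH] Hd Hc.
  by split=> // k [].
rewrite /run_phases -addn1 iotaD foldl_cat add0n /= -/(run_phases ph T).
have I0 := IH (fun t d tT => Hd t d (ltnW tT)) (fun t k tT => Hc t k (ltnW tT)).
have [sz C] := steps_ok I0 (Hd T ^~ (ltnSn T)).
split=> // k [vk]; rewrite addn1 ltnS leq_eqVlt => /orP[/eqP kT|kT]; apply: C.
  by right; apply: Hc.
by left.
Qed.
End Sem.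


Lemma In_flatten (T : Type) (ss : seq (seq T)) y :
  List.In y (flatten ss) -> exists s, List.In s ss /\ List.In y s.
Proof.
elim: ss => [|s ss IH] //=; elim: s => [|x s IHs] /=.
  by move/IH=> [s' [si yi]]; exists s'; split=> //; right.
case=> [<-|/IHs [s' [[<-|si] yi]]]; first by exists (x :: s); split; left.
- by exists (x :: s); split; [left|right].
- by exists s'; split=> //; right.
Qed.

Lemma In_flatten_intro (T : Type) (ss : seq (seq T)) s y :
  List.In s ss -> List.In y s -> List.In y (flatten ss).
Proof.
elim: ss => [|s' ss IH] //= [->|si] yi.
  by elim: s yi {IH} => [|x s IHs] //= [->|yi]; [left|right; apply: IHs].
by elim: s' {IH si yi} (IH si yi) => [|x s' IHs] //= H; right; apply: IHs.
Qed.

Lemma In_map_intro (A B : Type) (f : A -> B) s x : List.In x s -> List.In (f x) (map f s).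
Proof. by elim: s => [|y s IH] //= [->|xi]; [left|right; apply: IH]. Qed.

Lemma In_cat (T : Type) (s1 s2 : seq T) y : List.In y (s1 ++ s2) -> List.In y s1 \/ List.In y s2.
Proof. by elim: s1 => [|x s1 IH] /=; [right|case=> [->|/IH [h|h]]; [left;left|left;right|right]]. Qed.

Lemma In_catl (T : Type) (s1 s2 : seq T) y : List.In y s1 -> List.In y (s1 ++ s2).
Proof. by elim: s1 => [|x s1 IH] //= [->|h]; [left|right; apply: IH]. Qed.

Lemma In_catr (T : Type) (s1 s2 : seq T) y : List.In y s2 -> List.In y (s1 ++ s2).
Proof. by elim: s1 => [|x s1 IH] //= h; right; apply: IH. Qed.

Lemma In_mem (T : eqType) (s : seq T) x : x \in s -> List.In x s.
Proof. by elim: s => [|y s IH] //=; rewrite inE => /orP[/eqP->|/IH]; [left|right]. Qed.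

Lemma In_enum (T : finType) (x : T) : List.In x (enum T).
Proof. by apply: In_mem; rewrite mem_enum. Qed.

Lemma sum_le (T : Type) (s : seq T) (f : T -> nat) c :
  (forall x, List.In x s -> (f x <= c)%N) -> (\sum_(x <- s) f x <= size s * c)%N.
Proof.
elim: s => [|x s IH] H; first by rewrite big_nil.
rewrite big_cons /= mulSn leq_add ?H ?IH //; [by left|by move=> y yi; apply: H; right].
Qed.

Lemma size_fl (T : Type) (m : nat) (ss : seq (seq T)) :
  (forall s, List.In s ss -> size s = m) -> size (flatten ss) = (size ss * m)%N.
Proof.
elim: ss => [|s ss IH] H //=.
by rewrite size_cat IH ?H ?mulSn //; [left|move=> s' si; apply: H; right].
Qed.

Arguments In_map {A B f s y}.
Arguments In_flatten {T ss y}.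
Arguments In_cat {T s1 s2 y}.

Section Conc.
Variables (n M J r : nat) (reg : 'I_n -> M.-tuple 'I_J) (kn : seq 'I_J -> 'I_r -> 'I_n).

Local Notation KW_ := (@KW n J r).
Local Notation KU_ := (@KU n J r).
Local Notation KBl_ := (@KBl n J r).
Local Notation KB_ := (@KB n J r).
Local Notation SKey := (@SKey n J r).
Local Notation SInp := (@SInp n J r).
Local Notation SZero := (@SZero n J r).
Local Notation DLin := (@DLin n J r).
Local Notation DBlk := (@DBlk n J r).
Local Notation def := (def n J r).
Local Notation key := (key n J r).

Definition phW (l : nat) : seq def :=
  [seq DLin (KW_ l i b) false (SInp i (kn (take l (reg i)) b))
      (flatten (map (fun k : 'I_l =>
         [seq (SKey (KU_ k i c), SKey (KW_ k (kn (take l (reg i)) b) c)) | c <- enum 'I_r])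
         (enum 'I_l)))
    | i <- enum 'I_n, b <- enum 'I_r].

Definition blk (l : nat) (t : l.-tuple 'I_J) (bq : bool) : def :=
  DBlk bq (tval t) (fun a c => SKey (KW_ l (kn t a) c)).

Definition phB (l : nat) : seq def :=
  flatten [seq [:: blk t false; blk t true] | t <- enum {: l.-tuple 'I_J}].

Definition phU1 (l : nat) (bq : bool) : seq def :=
  [seq DLin ((if bq then KB_ else KU_) l i c) true SZero
      [seq (SKey (KW_ l i d), SKey (KBl_ bq (take l (reg i)) d c)) | d <- enum 'I_r]
    | i <- enum 'I_n, c <- enum 'I_r].

Definition phU (l : nat) : seq def := phU1 l false ++ phU1 l true.

Definition ph (t : nat) : seq def :=
  if (t %% 3 == 0)%N then phW (t %/ 3)%N else if (t %% 3 == 1)%N then phB (t %/ 3)%N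
  else phU (t %/ 3)%N.

Definition valid (k : key) : Prop :=
  match k with
  | KW l _ _ | KU l _ _ | KB l _ _ => (l <= M)%N
  | KBl _ q _ _ => (size q <= M)%N
  end.

Definition kph (k : key) : nat :=
  match k with
  | KW l _ _ => 3 * l
  | KBl _ q _ _ => 3 * size q + 1
  | KU l _ _ | KB l _ _ => 3 * l + 2
  end%N.

Hypothesis HS : mrd_structure reg kn.

Lemma size_reg_take l i : (l <= M)%N -> size (take l (reg i)) = l.
Proof. by move=> lM; rewrite size_takel // size_tuple. Qed.

Lemma coverage t k : (t < 3 * M.+1)%N -> valid k -> kph k = t ->
  exists d, List.In d (ph t) /\ defines d k.
Proof.
move=> tT; case: k => [l i b|l i b|bq q a b|l i b] /= vk kt.
- have e1 : (t %% 3 = 0)%N by lia. have e2 : (t %/ 3 = l)%N by lia.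
  have -> : ph t = phW l by rewrite /ph e1 e2.
  eexists; split; first (apply: In_flatten_intro;
    [apply: In_map_intro (In_enum i)|exact: In_map_intro (In_enum b)]).
  by [].
- have e1 : (t %% 3 = 2)%N by lia. have e2 : (t %/ 3 = l)%N by lia.
  have -> : ph t = phU l by rewrite /ph e1 e2.
  eexists; split; first (apply: In_catl; apply: In_flatten_intro;
    [apply: In_map_intro (In_enum i)|exact: In_map_intro (In_enum b)]).
  by [].
- have e1 : (t %% 3 = 1)%N by lia. have e2 : (t %/ 3 = size q)%N by lia.
  have -> : ph t = phB (size q) by rewrite /ph e1 e2.
  pose t0 : (size q).-tuple 'I_J := in_tuple q.
  exists (blk t0 bq); split; last by exists a, b.
  apply: In_flatten_intro; first by apply: In_map_intro (In_enum t0).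
  by case: (bq); [right; left|left].
- have e1 : (t %% 3 = 2)%N by lia. have e2 : (t %/ 3 = l)%N by lia.
  have -> : ph t = phU l by rewrite /ph e1 e2.
  eexists; split; first (apply: In_catr; apply: In_flatten_intro;
    [apply: In_map_intro (In_enum i)|exact: In_map_intro (In_enum b)]).
  by [].
Qed.


Variables (R : realFieldType) (isq : 'M[R]_r -> 'M[R]_r) (S : 'M[R]_n).

Definition val (k : key) : R :=
  match k with
  | KW l i b => mrdW kn S l (reg i) i b
  | KU l i c => (mrdW kn S l (reg i) *m invmx (mrdV kn S l (take l (reg i)))) i c
  | KBl bq q a b => (if bq then isq else invmx) (mrdV kn S (size q) q) a b
  | KB l i c => (mrdW kn S l (reg i) *m isq (mrdV kn S l (take l (reg i)))) i c
  end.

Lemma region p a : (size p <= M)%N -> take (size p) (reg (kn p a)) = p.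
Proof. by case: HS => _ H2 _ _ sp; apply/eqP; apply: H2. Qed.

Lemma knotW k q a c : (size q <= M)%N -> (k <= size q)%N ->
  mrdV kn S k q a c = mrdW kn S k (reg (kn q a)) (kn q a) c.
Proof.
move=> sq kq.
have e : take k (reg (kn q a)) = take k q by rewrite -{2}(region a sq) take_takel.
by rewrite mrdV_W mrdW_take (@mrdW_take _ _ _ _ kn S k (reg (kn q a))) e.
Qed.

Lemma phases_def t d : (t < 3 * M.+1)%N -> List.In d (ph t) ->
  def_ok isq S val (fun k => valid k /\ (kph k < t)%N) d.
Proof.
move=> tT; rewrite /ph; set l := (t %/ 3)%N.
have lM : (l <= M)%N by rewrite /l; lia.
case: ifP => [/eqP e0|/negbT e0].
  move=> /In_flatten [s0 [/In_map [i [_ ->]] /In_map [b [_ ->]]]].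
  split=> //.
  - move=> t0 /In_flatten [s1 [/In_map [k [_ ->]] /In_map [c [_ ->]]]] /=.
    have kl := ltn_ord k; rewrite /l in kl.
    have := lM; rewrite /l => lM2; split; split; lia.
  - rewrite /= mrdW_rec !mxE summxE; congr (_ - _).
    rewrite big_flatten big_map big_enum /=; apply: eq_bigr => k _.
    rewrite big_map big_enum /= mxE; apply: eq_bigr => c _.
    rewrite mxE [X in _ * X]mxE knotW ?size_reg_take //; exact: ltnW.
case: ifP => [/eqP e1|/negbT e1].
  move=> /In_flatten [s0 [/In_map [t0 [_ ->]] di]].
  have st0 : size t0 = l by rewrite size_tuple.
  have {}di : exists bq, d = blk t0 bq.
    by case: di => [<-|[<-|//]]; [exists false|exists true].
  case: di => bq ->; split.
    by move=> a b /=; split=> //; move: lM; rewrite /l; lia.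
  move=> a b /=; congr ((if bq then isq else invmx) _ a b).
  apply/matrixP => a' b'; rewrite [RHS]mxE knotW ?st0 //.
move=> /In_cat di.
have {}di : exists bq, List.In d (phU1 l bq) by case: di => h; [exists false|exists true].
case: di => bq /In_flatten [s0 [/In_map [i [_ ->]] /In_map [c [_ ->]]]].
split=> //.
- move=> t0 /In_map [d' [_ ->]] /=; rewrite size_reg_take //.
  by split; split=> //; move: lM; rewrite /l; lia.
- rewrite /= add0r big_map big_enum /= size_reg_take //.
  by case: (bq) => /=; rewrite mxE; apply: eq_bigr.
Qed.

Lemma card_bound l : (l <= M)%N -> (J ^ l * r <= n)%N.
Proof.
move=> lM; case: HS => H1 _ H3 _.
pose f := fun x : l.-tuple 'I_J * 'I_r => kn x.1 x.2.
have finj : injective f.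
  case=> [t1 a1] [t2 a2]; rewrite /f /= => e.
  have e1 : tval t1 = tval t2 by apply: (H3 _ _ a1 a2); rewrite ?size_tuple.
  have e2 : t1 = t2 by apply: val_inj.
  subst t2; congr (_, _); apply: (H1 t1); rewrite ?size_tuple //.
have := @leq_card _ _ f finj.
by rewrite card_prod card_tuple !card_ord.
Qed.

End Conc.

Lemma In_mem_inv (T : eqType) (s : seq T) x : List.In x s -> x \in s.
Proof. by elim: s => [|y s IH] //= [->|/IH h]; rewrite inE ?eqxx ?h ?orbT. Qed.

Section Cost.
Variables (n M J r : nat) (reg : 'I_n -> M.-tuple 'I_J) (kn : seq 'I_J -> 'I_r -> 'I_n).
Hypothesis HS : mrd_structure reg kn.

Lemma phase_cost t : (t < 3 * M.+1)%N ->
  (\sum_(d <- ph reg kn t) cost_def d <= 4 * n * r ^ 2 * M.+1)%N.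
Proof.
move=> tT; rewrite /ph; set l := (t %/ 3)%N.
have lM : (l <= M)%N by rewrite /l; lia.
case: ifP => _.
  apply: leq_trans (sum_le (c := (2 * (l * r))%N) _) _.
    move=> d /In_flatten [s0 [/In_map [i [_ ->]] /In_map [b [_ ->]]]] /=.
    rewrite (@size_fl _ r); last by move=> s1 /In_map [k [_ ->]]; rewrite size_map size_enum_ord.
    by rewrite size_map size_enum_ord.
  rewrite (@size_fl _ r); last by move=> s1 /In_map [k [_ ->]]; rewrite size_map size_enum_ord.
  rewrite size_map size_enum_ord; move: lM; clearbody l => lM; nia.
case: ifP => _.
  apply: leq_trans (sum_le (c := (r ^ 3)%N) _) _.
    by move=> d /In_flatten [s0 [/In_map [t0 [_ ->]] [<-|[<-|//]]]].
  rewrite (@size_fl _ 2); last by move=> s1 /In_map [k [_ ->]].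
  rewrite size_map -cardT card_tuple card_ord.
  have hx := card_bound HS lM; move: hx lM; clearbody l; move: (J ^ l)%N => x hx lM.
  nia.
rewrite /phU big_cat /=.
have h : forall bq, (\sum_(d <- phU1 r reg l bq) cost_def d <= n * r * (2 * r))%N.
  move=> bq; apply: leq_trans (sum_le (c := (2 * r)%N) _) _.
    by move=> d /In_flatten [s0 [/In_map [i [_ ->]] /In_map [b [_ ->]]]] /=; rewrite size_map size_enum_ord.
  rewrite (@size_fl _ r); last by move=> s1 /In_map [k [_ ->]]; rewrite size_map size_enum_ord.
  by rewrite size_map size_enum_ord.
have h1 := h false; have h2 := h true; move: h1 h2; clearbody l; nia.
Qed.
End Cost.

Theorem proposition5 :
  exists C : nat,
  forall (R : realFieldType) (n M J r : nat)
         (reg : 'I_n -> M.-tuple 'I_J) (kn : seq 'I_J -> 'I_r -> 'I_n)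
         (isq : 'M[R]_r -> 'M[R]_r),
  mrd_structure reg kn ->
  exists (P : seq (instr n r)) (out : 'I_n -> seq 'I_J -> 'I_r -> opnd n),
    (prog_cost P <= C * n * ((M.+1) * r) ^ 2)%N /\
    forall S : 'M[R]_n, posdef S ->
      forall (i : 'I_n) (p : seq 'I_J) (a : 'I_r), (size p <= M)%N ->
        eval_opnd S (run_prog isq S P) (out i p a) = mrd isq reg kn S i p a.
Proof.
exists 12%N => R n M J r reg kn isq HS.
pose T := (3 * M.+1)%N.
pose st := run_phases (ph reg kn) T.
exists (sP st), (fun i p a => if in_region reg p i then se st (@KB n J r (size p) i a) else OZero n).
split.
  rewrite run_phases_cost.
  apply: leq_trans (sum_le (c := (4 * n * r ^ 2 * M.+1)%N) _) _.
    move=> t /In_mem_inv; rewrite mem_iota add0n => /andP[_ tT].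
    exact: phase_cost.
  rewrite size_iota /T; nia.
move=> S _ i p a sp.
have I := phases_ok (phases_def HS isq S) (@coverage _ _ _ _ reg kn).
case: I => _ C.
rewrite /mrd; case: ifP => hr //.
have hk : (kph (@KB n J r (size p) i a) < T)%N by rewrite /T /=; lia.
have [_ ->] := C (@KB n J r (size p) i a) (conj sp hk).
rewrite /= /mrdBlock (eqP hr) (@mrdW_take _ _ _ _ kn S (size p) (reg i)) (eqP hr).
done.
Qed.
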